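(* For every set of formulas $\Gamma$ and every formula $\alpha$: if $\Gamma\vDash_{\mathcal{M}_1^1}\alpha$ then $\Gamma\vdash_{L_1^1}\alpha$.
   Context: Formulas are built from a countable set of propositional variables using unary $\neg,\circ$ and binary $\land,\lor,\to$; $\circ^0\alpha=\alpha$, $\circ^{m+1}\alpha=\circ(\circ^m\alpha)$. mbC is the Hilbert calculus with the axiom schemas of a standard axiomatization of positive classical propositional logic in $\land,\lor,\to$, plus (TND) $\alpha\lor\neg\alpha$ and (bc1) $\circ\alpha\to(\alpha\to(\neg\alpha\to\beta))$, with modus ponens as only rule; mbCciw is mbC plus (ciw) $\circ\alpha\lor(\alpha\land\neg\alpha)$; $L_1^0$ is mbCciw plus $\circ\circ\circ\alpha$; $L_1^1$ is $L_1^0$ plus (cf) $\neg\neg\alpha\to\alpha$ and (ce) $\alpha\to\neg\neg\alpha$. $\Gamma\vdash_L\alpha$ means derivability in $L$. Semantics: with Boolean operations $\land,\lor,\to,\sim$ on $\{0,1\}$, let $\mathbb{B}_1^0=\{x\in\{0,1\}^3: x_1\lor x_2=1,\ x_3\lor\sim(x_1\land x_2)=1\}$. The multialgebra $\mathcal{B}_1^1$ on $\mathbb{B}_1^0$ has $x\# y=\{z\in\mathbb{B}_1^0: z_1=x_1\# y_1\}$ for $\#\in\{\land,\lor,\to\}$, $\neg x=\{z\in\mathbb{B}_1^0: z_1=x_2 \text{ and } z_2=x_1\}$, $\circ x=\{(\sim(x_1\land x_2),x_3,x_3\land\sim(x_1\land x_2))\}$. $D_1^0=\{x:x_1=1\}$,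 $\mathcal{M}_1^1=(\mathcal{B}_1^1,D_1^0)$. Valuations over $\mathcal{M}_1^1$ are maps $h$ from formulas to $\mathbb{B}_1^0$ with $h(\alpha\#\beta)\in h(\alpha)\#h(\beta)$, $h(\neg\alpha)\in\neg h(\alpha)$, $h(\circ\alpha)\in\circ h(\alpha)$; $\Gamma\vDash_{\mathcal{M}_1^1}\alpha$ iff every valuation $h$ with $h[\Gamma]\subseteq D_1^0$ has $h(\alpha)\in D_1^0$. *)

(* Defs.v *)
From Stdlib Require Import Bool.

Inductive form : Type :=
| Var  : nat -> form
| Neg  : form -> form
| Circ : form -> form
| And  : form -> form -> form
| Or   : form -> form -> form
| Imp  : form -> form -> form.

Fixpoint circn (m : nat) (a : form) : form :=
  match m with 0 => a | S k => Circ (circn k a) end.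

(* Axiom schemas of L_1^1.
   Positive classical logic: the standard axiomatization used for mbC
   (Carnielli--Coniglio), Ax1--Ax9. *)
Inductive axiom_L11 : form -> Prop :=
| Ax1 a b     : axiom_L11 (Imp a (Imp b a))
| Ax2 a b c   : axiom_L11 (Imp (Imp a b) (Imp (Imp a (Imp b c)) (Imp a c)))
| Ax3 a b     : axiom_L11 (Imp a (Imp b (And a b)))
| Ax4 a b     : axiom_L11 (Imp (And a b) a)
| Ax5 a b     : axiom_L11 (Imp (And a b) b)
| Ax6 a b     : axiom_L11 (Imp a (Or a b))
| Ax7 a b     : axiom_L11 (Imp b (Or a b))
| Ax8 a b c   : axiom_L11 (Imp (Imp a c) (Imp (Imp b c) (Imp (Or a b) c)))
| Ax9 a b     : axiom_L11 (Or a (Imp a b))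
| AxTND a     : axiom_L11 (Or a (Neg a))
| AxBc1 a b   : axiom_L11 (Imp (Circ a) (Imp a (Imp (Neg a) b)))
| AxCiw a     : axiom_L11 (Or (Circ a) (And a (Neg a)))
| AxCirc3 a   : axiom_L11 (circn 3 a)
| AxCf a      : axiom_L11 (Imp (Neg (Neg a)) a)
| AxCe a      : axiom_L11 (Imp a (Neg (Neg a))).

Inductive derivable (Gamma : form -> Prop) : form -> Prop :=
| d_hyp a   : Gamma a -> derivable Gamma a
| d_ax a    : axiom_L11 a -> derivable Gamma a
| d_mp a b  : derivable Gamma a -> derivable Gamma (Imp a b) -> derivable Gamma b.

Definition val3 : Type := (bool * bool * bool)%type.
Definition c1 (x : val3) : bool := fst (fst x).
Definition c2 (x : val3) : bool := snd (fst x).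
Definition c3 (x : val3) : bool := snd x.

Definition inB10 (x : val3) : Prop :=
  c1 x || c2 x = true /\ c3 x || negb (c1 x && c2 x) = true.

(* Multioperations of B_1^1, as membership predicates "z \in x # y". *)
Definition m_and (x y z : val3) : Prop := inB10 z /\ c1 z = c1 x && c1 y.
Definition m_or  (x y z : val3) : Prop := inB10 z /\ c1 z = c1 x || c1 y.
Definition m_imp (x y z : val3) : Prop := inB10 z /\ c1 z = implb (c1 x) (c1 y).
Definition m_neg (x z : val3) : Prop := inB10 z /\ c1 z = c2 x /\ c2 z = c1 x.
Definition m_circ (x z : val3) : Prop :=
  z = (negb (c1 x && c2 x), c3 x, c3 x && negb (c1 x && c2 x)).

Definition designated (x : val3) : Prop := c1 x = true.

Definition valuation (h : form -> val3) : Prop :=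
  (forall a, inB10 (h a)) /\
  (forall a b, m_and (h a) (h b) (h (And a b))) /\
  (forall a b, m_or  (h a) (h b) (h (Or a b))) /\
  (forall a b, m_imp (h a) (h b) (h (Imp a b))) /\
  (forall a, m_neg (h a) (h (Neg a))) /\
  (forall a, m_circ (h a) (h (Circ a))).

Definition entails (Gamma : form -> Prop) (a : form) : Prop :=
  forall h, valuation h ->
    (forall g, Gamma g -> designated (h g)) -> designated (h a).

(* Main.v *)
Require Import Defs.
From Stdlib Require Import Bool Classical ClassicalEpsilon Cantor.

Lemma der_mono (G G' : form -> Prop) a :
  derivable G a -> (forall x, G x -> G' x) -> derivable G' a.
Proof.
  intros H Hs; induction H.
  - apply d_hyp; auto.
  - apply d_ax; auto.
  - eapply d_mp; [exact IHderivable1|exact IHderivable2].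
Qed.

Definition ext (G : form -> Prop) (p : form) : form -> Prop := fun x => G x \/ x = p.

Lemma der_id G p : derivable G (Imp p p).
Proof.
  eapply d_mp. apply d_ax, (Ax1 p (Imp p p)).
  eapply d_mp. apply d_ax, (Ax1 p p).
  apply d_ax, (Ax2 p (Imp p p) p).
Qed.

Lemma deduction G p a : derivable (ext G p) a -> derivable G (Imp p a).
Proof.
  intros H; induction H.
  - destruct H as [H|H].
    + eapply d_mp. apply d_hyp, H. apply d_ax, Ax1.
    + subst. apply der_id.
  - eapply d_mp. apply d_ax, H. apply d_ax, Ax1.
  - eapply d_mp. apply IHderivable2.
    eapply d_mp. apply IHderivable1. apply d_ax, Ax2.
Qed.

Fixpoint enc (a : form) : nat :=
  match a with
  | Var n => to_nat (0, n)
  | Neg a => to_nat (1, enc a)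
  | Circ a => to_nat (2, enc a)
  | And a b => to_nat (3, to_nat (enc a, enc b))
  | Or a b => to_nat (4, to_nat (enc a, enc b))
  | Imp a b => to_nat (5, to_nat (enc a, enc b))
  end.

Lemma to_nat_inj p q : to_nat p = to_nat q -> p = q.
Proof. intros H. rewrite <- (cancel_of_to p), <- (cancel_of_to q), H. reflexivity. Qed.

Lemma pair_inj x y u v : to_nat (x, y) = to_nat (u, v) -> x = u /\ y = v.
Proof. intros H; apply to_nat_inj in H; injection H; auto. Qed.

Lemma enc_inj a b : enc a = enc b -> a = b.
Proof.
  revert b; induction a; intros [] H; cbn [enc] in H;
  apply pair_inj in H; destruct H as [Hf Hs]; try discriminate;
  try (apply pair_inj in Hs; destruct Hs as [Hs1 Hs2]);
  try (rewrite (IHa1 _ Hs1), (IHa2 _ Hs2); reflexivity);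
  try (rewrite (IHa _ Hs); reflexivity);
  subst; reflexivity.
Qed.

Section Lind.
Variable Gamma : form -> Prop.
Variable alpha : form.

Fixpoint chain (n : nat) : form -> Prop :=
  match n with
  | 0 => Gamma
  | S k => fun x => chain k x \/ (enc x = k /\ ~ derivable (ext (chain k) x) alpha)
  end.

Definition Delta : form -> Prop := fun x => exists n, chain n x.

Lemma chain_mono n m x : n <= m -> chain n x -> chain m x.
Proof. induction 1; simpl; auto. Qed.

Lemma chain_cons (H0 : ~ derivable Gamma alpha) n : ~ derivable (chain n) alpha.
Proof.
  induction n; simpl; auto.
  destruct (classic (exists p, enc p = n /\ ~ derivable (ext (chain n) p) alpha)) as [[p [Hp Hd]]|Hn].
  - intros D; apply Hd; eapply der_mono; [exact D|].
    intros x [Hx|[Hx _]]; [left; auto|right; apply enc_inj; congruence].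
  - intros D; apply IHn; eapply der_mono; [exact D|].
    intros x [Hx|Hx]; auto. exfalso; apply Hn; eauto.
Qed.

Lemma Delta_compact a : derivable Delta a -> exists n, derivable (chain n) a.
Proof.
  induction 1.
  - destruct H as [n Hn]. exists n. apply d_hyp; auto.
  - exists 0. apply d_ax; auto.
  - destruct IHderivable1 as [n1 H1], IHderivable2 as [n2 H2].
    exists (n1 + n2). eapply d_mp.
    + eapply der_mono; [exact H1|]. intros; eapply chain_mono; [|eauto]. apply PeanoNat.Nat.le_add_r.
    + eapply der_mono; [exact H2|]. intros; eapply chain_mono; [|eauto].
      rewrite PeanoNat.Nat.add_comm. apply PeanoNat.Nat.le_add_r.
Qed.

Hypothesis H0 : ~ derivable Gamma alpha.

Lemma Delta_cons : ~ derivable Delta alpha.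
Proof. intros D. destruct (Delta_compact _ D) as [n Hn]. eapply chain_cons; eauto. Qed.

Lemma Delta_max p : ~ derivable (ext Delta p) alpha -> Delta p.
Proof.
  intros Hd. exists (S (enc p)). simpl. right. split; auto.
  intros D; apply Hd; eapply der_mono; [exact D|].
  intros x [Hx|Hx]; [left; exists (enc p); auto|right; auto].
Qed.

Lemma Delta_closed p : derivable Delta p -> Delta p.
Proof.
  intros Hp. apply Delta_max. intros D. apply Delta_cons.
  eapply d_mp. exact Hp. apply deduction; auto.
Qed.

Lemma Delta_notin p : ~ Delta p -> derivable Delta (Imp p alpha).
Proof.
  intros Hn. apply deduction. apply NNPP. intros D. apply Hn, Delta_max; auto.
Qed.

Lemma Dax a : axiom_L11 a -> Delta a.
Proof. intros; apply Delta_closed, d_ax; auto. Qed.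

Lemma Dmp a b : Delta a -> Delta (Imp a b) -> Delta b.
Proof. intros Ha Hab; apply Delta_closed; eapply d_mp; [apply d_hyp, Ha|apply d_hyp, Hab]. Qed.

Lemma D_and a b : Delta (And a b) <-> Delta a /\ Delta b.
Proof.
  split.
  - intros H; split; eapply Dmp; eauto using Dax, Ax4, Ax5.
  - intros [Ha Hb]. eapply Dmp; [exact Hb|]. eapply Dmp; [exact Ha|]. apply Dax, Ax3.
Qed.

Lemma D_or a b : Delta (Or a b) <-> Delta a \/ Delta b.
Proof.
  split.
  - intros H. apply NNPP; intros Hn.
    apply Delta_cons.
    assert (Na : derivable Delta (Imp a alpha)) by (apply Delta_notin; intro; apply Hn; auto).
    assert (Nb : derivable Delta (Imp b alpha)) by (apply Delta_notin; intro; apply Hn; auto).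
    exact (d_mp _ _ _ (d_hyp _ _ H) (d_mp _ _ _ Nb (d_mp _ _ _ Na (d_ax _ _ (Ax8 a b alpha))))).
  - intros [H|H]; eapply Dmp; eauto using Dax, Ax6, Ax7.
Qed.

Lemma D_imp a b : Delta (Imp a b) <-> (Delta a -> Delta b).
Proof.
  split.
  - intros H Ha; eapply Dmp; eauto.
  - intros H. destruct (classic (Delta a)) as [Ha|Ha].
    + eapply Dmp. apply H, Ha. apply Dax, Ax1.
    + destruct (proj1 (D_or a (Imp a b)) (Dax _ (Ax9 a b))); tauto.
Qed.

Lemma D_alpha : ~ Delta alpha.
Proof. intros H; apply Delta_cons, d_hyp, H. Qed.

Lemma D_tnd a : Delta a \/ Delta (Neg a).
Proof. apply D_or, Dax, AxTND. Qed.

Lemma D_bc1 a : Delta (Circ a) -> Delta a -> Delta (Neg a) -> False.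
Proof.
  intros H1 H2 H3. apply D_alpha. eapply Dmp; [exact H3|].
  eapply Dmp; [exact H2|]. eapply Dmp; [exact H1|]. apply Dax, AxBc1.
Qed.

Lemma D_circ a : Delta (Circ a) <-> ~ (Delta a /\ Delta (Neg a)).
Proof.
  split.
  - intros H [H1 H2]; eapply D_bc1; eauto.
  - intros H. destruct (proj1 (D_or _ _) (Dax _ (AxCiw a))) as [H1|H1]; auto.
    apply D_and in H1; tauto.
Qed.

Lemma D_neg2 a : Delta (Neg (Neg a)) <-> Delta a.
Proof. split; intros; eapply Dmp; eauto using Dax, AxCf, AxCe. Qed.

Lemma D_c3 a : Delta (Circ (Circ (Circ a))).
Proof. apply (Dax _ (AxCirc3 a)). Qed.

End Lind.

Definition bP (P : Prop) : bool := if excluded_middle_informative P then true else false.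

Lemma bP_spec P : bP P = true <-> P.
Proof. unfold bP; destruct excluded_middle_informative; split; auto; discriminate. Qed.

Lemma bP_eq P Q : (P <-> Q) -> bP P = bP Q.
Proof.
  intros H; unfold bP; do 2 destruct excluded_middle_informative; tauto.
Qed.

Lemma bP_and P Q : bP (P /\ Q) = bP P && bP Q.
Proof. unfold bP; repeat destruct excluded_middle_informative; simpl; tauto. Qed.
Lemma bP_or P Q : bP (P \/ Q) = bP P || bP Q.
Proof. unfold bP; repeat destruct excluded_middle_informative; simpl; tauto. Qed.
Lemma bP_imp P Q : bP (P -> Q) = implb (bP P) (bP Q).
Proof. unfold bP; repeat destruct excluded_middle_informative; simpl; tauto. Qed.
Lemma bP_not P : bP (~ P) = negb (bP P).
Proof. unfold bP; repeat destruct excluded_middle_informative; simpl; tauto. Qed.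

Theorem theorem9 (Gamma : form -> Prop) (alpha : form) :
  entails Gamma alpha -> derivable Gamma alpha.
Proof.
  intros He. apply NNPP; intros H0.
  set (D := Delta Gamma alpha).
  set (h := fun a => (bP (D a), bP (D (Neg a)), bP (D (Neg (Circ a))))).
  assert (Hin : forall a, inB10 (h a)).
  { intros a; unfold inB10, h, c1, c2, c3; simpl. split.
    - rewrite <- bP_or. apply bP_spec. apply D_tnd; auto.
    - rewrite <- bP_and, <- bP_not, <- bP_or. apply bP_spec.
      destruct (D_tnd Gamma alpha H0 (Circ a)); auto.
      right; intros [H1 H2]; eapply D_bc1; eauto. }
  assert (Hv : valuation h).
  { unfold valuation, m_and, m_or, m_imp, m_neg, m_circ.
    repeat split; intros; try apply Hin; unfold h, c1, c2, c3; simpl.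
    - rewrite <- bP_and; apply bP_eq, D_and; auto.
    - rewrite <- bP_or; apply bP_eq, D_or; auto.
    - rewrite <- bP_imp; apply bP_eq, D_imp; auto.
    - apply bP_eq, D_neg2; auto.
    - f_equal; [f_equal|].
      + rewrite <- bP_and, <- bP_not; apply bP_eq, D_circ; auto.
      + rewrite <- bP_and, <- bP_not, <- bP_and; apply bP_eq.
        pose proof (D_c3 Gamma alpha H0 a) as C3.
        apply (D_circ Gamma alpha H0) in C3.
        pose proof (D_tnd Gamma alpha H0 (Circ (Circ a))).
        pose proof (D_circ Gamma alpha H0 (Circ a)).
        pose proof (D_circ Gamma alpha H0 a).
        unfold D in *. tauto. }
  assert (Hd : designated (h alpha)).
  { apply He; auto. intros g Hg. unfold designated, h, c1; simpl.
    apply bP_spec. exists 0; exact Hg. }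
  unfold designated, h, c1 in Hd; simpl in Hd. apply (proj1 (bP_spec _)) in Hd.
  eapply D_alpha; eauto.
Qed.
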